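(* Let $n,k,r,s$ be non-negative integers with $k\ge1$ and $0\le r,s\le 2k-1$. Then $$\det\Big(C_{2n+2i+2j+r+s}^{(2k-1)}(r\to s)\Big)_{0\le i,j\le k-1}=\begin{cases}0,&\text{if }\gcd(r+1,2k+1)\ne1\text{ or }\gcd(s+1,2k+1)\ne1,\\ (-1)^{\sum_{i=1}^k\left(\lfloor\frac{i(r+1)}{2k+1}\rfloor+\lfloor\frac{i(s+1)}{2k+1}\rfloor\right)},&\text{if }\gcd(r+1,2k+1)=\gcd(s+1,2k+1)=1.\end{cases}$$
   Context: $C_N^{(K)}(r\to s)$ is the number of lattice paths with steps $(1,1),(1,-1)$ from $(0,r)$ to $(N,s)$ never going below the $x$-axis nor above the line $y=K$. *)

(* Defs.v *)
From mathcomp Require Import all_boot all_algebra.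
Set Implicit Arguments. Unset Strict Implicit. Unset Printing Implicit Defensive.

(* A lattice path with steps (1,1),(1,-1) of length N is encoded by its
   sequence of steps: true = up-step (1,1), false = down-step (1,-1).
   Heights are tracked in int. *)
Fixpoint path_ok (K : nat) (h : int) (steps : seq bool) (s : int) : bool :=
  match steps with
  | [::] => h == s
  | b :: st =>
      let h' := (if b then h + 1 else h - 1)%R in
      [&& (0 <= h')%R, (h' <= K%:Z)%R & path_ok K h' st s]
  end.

Definition C (N K r s : nat) : nat :=
  #|[set t : N.-tuple bool |
      [&& (0 <= r <= K)%N & path_ok K r%:Z (tval t) s%:Z]]|.

(* Main.v *)
Require Import Defs.
From mathcomp Require Import all_boot all_algebra all_field zify ring.
Import GRing.Theory Num.Theory.

Fixpoint cnt (K N h s : nat) : nat :=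
  match N with
  | 0 => (h == s) : nat
  | N'.+1 => (if h is h'.+1 then cnt K N' h' s else 0)
             + (if h.+1 <= K then cnt K N' h.+1 s else 0)
  end.

Lemma sum_tupleS N (F : N.+1.-tuple bool -> nat) :
  \sum_(t : N.+1.-tuple bool) F t =
  \sum_(t : N.-tuple bool) F [tuple of true :: t] +
  \sum_(t : N.-tuple bool) F [tuple of false :: t].
Proof.
rewrite (reindex (fun p : bool * N.-tuple bool => [tuple of p.1 :: p.2])) /=.
  rewrite -(pair_big predT predT (fun (b : bool) (t : N.-tuple bool) => F (cons_tuple b t))) /=.
  by rewrite big_bool.
exists (fun t : N.+1.-tuple bool => (thead t, [tuple of behead t])).
  move=> [b t] _ /=; rewrite theadE; congr pair; apply: val_inj => //.
move=> t _ /=; by rewrite -tuple_eta.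
Qed.

Lemma path_cnt K N : forall h s, (h <= K)%N ->
  \sum_(t : N.-tuple bool) (path_ok K (Posz h) t s%:Z : nat) = cnt K N h s.
Proof.
elim: N => [|N IH] h s hK.
  rewrite (big_pred1 [tuple]) => [|t]; last by rewrite /= -val_eqE; case: t => [[]].
  by rewrite /= eqz_nat.
rewrite sum_tupleS /= addnC; congr addn.
  case: h hK => [|h] hK.
    by rewrite big1 // => t _; rewrite /= subr_ge0 ler0n andFb.
  rewrite -IH; last by apply: ltnW.
  apply: eq_bigr => t _ /=.
  have -> : ((Posz h.+1) - 1)%R = (Posz h) by rewrite -addn1 PoszD addrK.
  by rewrite lez_nat ltnW.
case: ifP => hK'.
  rewrite -IH //; apply: eq_bigr => t _ /=.
  by rewrite -addn1 PoszD lez_nat addn1 hK'.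
by rewrite big1 // => t _ /=; rewrite -[((Posz h) + 1)%R]PoszD lez_nat addn1 hK'; idtac. 
Qed.


Lemma cnt_far K N : forall h s, h + N < s -> cnt K N h s = 0.
Proof.
elim: N => [|N IH] h s hs /=.
  by case: eqP => //; lia.
rewrite (_ : (if h.+1 <= K then _ else _) = 0); last by case: ifP => // _; apply: IH; lia.
by case: h hs => [|h] hs //=; rewrite IH //; lia.
Qed.

Lemma cnt_par K N : forall h s, odd (N + h + s) -> cnt K N h s = 0.
Proof.
elim: N => [|N IH] h s hs /=.
  by case: eqP => // e; move: hs; rewrite e add0n addnn odd_double.
rewrite (_ : (if h.+1 <= K then _ else _) = 0); last first.
  by case: ifP => // _; apply: IH; move: hs; rewrite !addSn !addnS.
case: h hs => [|h] hs //=; rewrite IH //; move: hs; rewrite !addSn !addnS /=.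
by rewrite negbK.
Qed.

Lemma cnt_diag K N : forall h, h + N <= K -> cnt K N h (h + N) = 1.
Proof.
elim: N => [|N IH] h hs /=; first by rewrite addn0 eqxx.
rewrite (_ : (if h is h'.+1 then _ else _) = 0); last first.
  by case: h hs => // h hs; apply: cnt_far; lia.
have -> : h.+1 <= K by lia.
by rewrite -addSnnS IH //; lia.
Qed.

Lemma cnt_cat K N1 N2 : forall h s, h <= K ->
  cnt K (N1 + N2) h s = \sum_(h' < K.+1) cnt K N1 h h' * cnt K N2 h' s.
Proof.
elim: N1 => [|N1 IH] h s hK /=.
  rewrite (bigD1 (Ordinal (hK : h < K.+1))) //= eqxx mul1n big1 ?addn0 //.
  by move=> i /negPf; rewrite -val_eqE /= eq_sym => ->.
rewrite (eq_bigr _ (fun i _ => mulnDl _ _ _)) big_split /=; congr (_ + _).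
  case: h hK => [|h] hK; first by rewrite big1.
  by rewrite IH //; lia.
case: ifP => hK'.
  by rewrite IH.
by rewrite big1.
Qed.

Local Open Scope ring_scope.

Section Spec.
Variable k : nat.
Hypothesis k1 : (1 <= k)%N.
Local Notation m := (2 * k + 1)%N.
Variable z : algC.
Hypothesis zp : (2 * m)%N.-primitive_root z.

Definition f (y : nat) := z ^+ y - (z ^+ y)^-1.
Definition lam (l : nat) := z ^+ l + (z ^+ l)^-1.

Lemma z2m : z ^+ (2 * m)%N = 1.
Proof. exact: prim_expr_order zp. Qed.

Lemma zneq0 : z != 0.
Proof.
apply/negP => /eqP z0; have := z2m; rewrite z0 expr0n /=.
have -> : ((2 * (2 * k + 1))%N == 0%N) = false by lia. by move=> /eqP; rewrite eq_sym oner_eq0.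
Qed.

Lemma zXneq0 y : z ^+ y != 0.
Proof. exact: expf_neq0 zneq0. Qed.

Lemma zm : z ^+ m = -1.
Proof.
have : (z ^+ m) ^+ 2 == 1 by rewrite -exprM mulnC z2m.
rewrite sqrf_eq1 => /orP [H|/eqP //]; exfalso; move: H.
rewrite -(expr0 z) (eq_prim_root_expr zp) /=.
rewrite mod0n modn_small //; lia.
Qed.

Lemma zXeq y y' : (z ^+ y == z ^+ y') = (y == y' %[mod (2 * m)%N]).
Proof. by have := eq_prim_root_expr zp y y'. Qed.

Lemma f0 : f 0 = 0.
Proof. by rewrite /f expr0 invr1 subrr. Qed.

Lemma f_cm c y : (y <= c * m)%N -> f (c * m - y)%N = - (-1) ^+ c * f y.
Proof.
move=> hy.
have e : z ^+ (c * m - y)%N = (-1) ^+ c * (z ^+ y)^-1.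
  apply: (mulIf (zXneq0 y)); rewrite -exprD subnK // mulnC exprM zm.
  by rewrite -mulrA mulVf ?mulr1 // zXneq0.
have e2 : ((-1) ^+ c)^-1 = (-1) ^+ c :> algC by rewrite -exprVn invrN1.
rewrite /f e invfM invrK e2.
have h2 : ((-1) ^+ c) * ((-1) ^+ c) = 1 :> algC by rewrite -exprMn mulrNN mulr1 expr1n.
have h3 : ((-1) ^+ c) != 0 :> algC by rewrite expf_neq0 // oppr_eq0 oner_eq0.
by rewrite mulNr mulrBr opprB.
Qed.

Lemma f_m y : (y <= m)%N -> f (m - y)%N = f y.
Proof. by move=> hy; rewrite -[m]mul1n f_cm ?mul1n // expr1 opprK mul1r. Qed.

Lemma f_add_m y : f (y + m)%N = - f y.
Proof.
rewrite /f exprD zm mulrN1 invrN; rewrite opprB opprK addrC; done.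
Qed.

Lemma f_addcm c y : f (y + c * m)%N = (-1) ^+ c * f y.
Proof.
elim: c => [|c IH]; first by rewrite mul0n addn0 expr0 mul1r.
by rewrite mulSn (addnC m) addnA f_add_m IH exprS mulN1r mulNr.
Qed.

Lemma f_eq0 y : (f y == 0) = (m %| y)%N.
Proof.
rewrite /f subr_eq0.
have -> : (z ^+ y == (z ^+ y)^-1) = (z ^+ (2 * y)%N == 1).
  rewrite mulnC exprM expr2 -(inj_eq (mulIf (zXneq0 y))) mulVf ?zXneq0 //.
rewrite -(expr0 z) zXeq mod0n.
rewrite /dvdn; apply/eqP/eqP => H.
  have : (2 * m %| 2 * y)%N by rewrite /dvdn H.
  by rewrite dvdn_pmul2l // /dvdn => /eqP.
by rewrite -muln_modr H muln0.
Qed.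

Lemma lam_f r l : f (r * l)%N + f ((r + 2) * l)%N = lam l * f (r.+1 * l)%N.
Proof.
have e1 : z ^+ ((r + 2) * l)%N = z ^+ (r * l)%N * z ^+ l * z ^+ l.
  by rewrite -!exprD; congr (_ ^+ _); lia.
have e2 : z ^+ (r.+1 * l)%N = z ^+ (r * l)%N * z ^+ l.
  by rewrite -!exprD; congr (_ ^+ _); lia.
rewrite /f /lam e1 e2.
have u0 := zXneq0 l; have v0 := zXneq0 (r * l).
set u := z ^+ l; set v := z ^+ (r * l).
field.
by rewrite u0 v0.
Qed.


Lemma geo (x : algC) : x ^+ (2 * m)%N = 1 ->
  \sum_(l < (2 * m)%N) x ^+ l = if x == 1 then (2 * m)%:R else 0.
Proof.
move=> hx; case: eqP => [->|ne].
  by rewrite (eq_bigr (fun _ => 1)) ?sumr_const ?card_ord // => i _; rewrite expr1n.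
have := subrX1 x (2 * m); rewrite hx subrr => /esym /eqP.
by rewrite mulf_eq0 subr_eq0 (negPf (introN eqP ne)) /= => /eqP.
Qed.

Lemma rt a : (z ^+ a) ^+ (2 * m)%N = 1.
Proof. by rewrite -exprM mulnC exprM z2m expr1n. Qed.

Lemma divr_eq1' (x y : algC) : y != 0 -> (x * y^-1 == 1) = (x == y).
Proof.
move=> y0; rewrite -(inj_eq (mulIf y0)) mul1r -mulrA mulVf // mulr1 //.
Qed.

Lemma orth a b : (1 <= a < m)%N -> (1 <= b < m)%N ->
  \sum_(l < (2 * m)%N) f (a * l)%N * f (b * l)%N =
  if a == b then - (4 * m)%:R else 0.
Proof.
move=> ha hb.
set x := z ^+ a; set y := z ^+ b.
have x0 : x != 0 by apply: zXneq0.
have y0 : y != 0 by apply: zXneq0.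
have E : forall l : 'I_(2 * m), f (a * l)%N * f (b * l)%N =
   (x * y) ^+ l - (x / y) ^+ l - (y / x) ^+ l + ((x * y)^-1) ^+ l.
  move=> l; rewrite /f !exprM -/x -/y !exprMn !exprVn.
  have xl := expf_neq0 l x0; have yl := expf_neq0 l y0.
  rewrite ?exprMn ?invfM; field; by rewrite xl yl.
rewrite (eq_bigr _ (fun l _ => E l)) !big_split /= !sumrN.
have hxy : (x * y) ^+ (2 * m)%N = 1 by rewrite exprMn !rt mulr1.
have hxy' : (x / y) ^+ (2 * m)%N = 1 by rewrite exprMn exprVn !rt invr1 mulr1.
have hyx' : (y / x) ^+ (2 * m)%N = 1 by rewrite exprMn exprVn !rt invr1 mulr1.
have hixy : ((x * y)^-1) ^+ (2 * m)%N = 1 by rewrite exprVn hxy invr1.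
rewrite !geo // invr_eq1.
have -> : (x * y == 1) = false.
  rewrite /x /y -exprD -(expr0 z) zXeq mod0n modn_small; last by lia.
  apply/negbTE; lia.
rewrite !divr_eq1' // /x /y !zXeq !modn_small; try lia.
rewrite (eq_sym b a); case: eqP => _; last by rewrite !subrr addr0.
rewrite add0r addr0 -opprD -mulr2n -mulrnA mulrnA.
by rewrite -mulrnA; congr (- (_ *+ _)); lia.
Qed.

Lemma fm l : f (m * l)%N = 0.
Proof. by apply/eqP; rewrite f_eq0 dvdn_mulr. Qed.

Definition P N a b := - ((4 * m)%:R)^-1 *
  \sum_(l < (2 * m)%N) f (a * l)%N * f (b * l)%N * lam l ^+ N.

Lemma P_rec N r b : P N.+1 r.+1 b = P N r b + P N (r + 2)%N b.
Proof.
rewrite /P -mulrDr -big_split /=; congr (_ * _); apply: eq_bigr => l _.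
rewrite -mulrDl -mulrDl (lam_f r l) exprS; ring.
Qed.


Lemma P_f0 N b : P N 0 b = 0.
Proof. by rewrite /P big1 ?mulr0 // => l _; rewrite mul0n f0 !mul0r. Qed.

Lemma P_fm N b : P N m b = 0.
Proof. by rewrite /P big1 ?mulr0 // => l _; rewrite fm !mul0r. Qed.

Lemma spec N : forall r s, (r <= 2 * k - 1)%N -> (s <= 2 * k - 1)%N ->
  (cnt (2 * k - 1) N r s)%:R = P N r.+1 s.+1.
Proof.
elim: N => [|N IH] r s hr hs.
  rewrite /P (eq_bigr (fun l : 'I_(2 * m) => f (r.+1 * l)%N * f (s.+1 * l)%N)); last first.
    by move=> l _; rewrite expr0 mulr1.
  rewrite orth; try lia.
  rewrite eqSS /=; case: eqP => _; last by rewrite mulr0.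
  by rewrite mulNr mulrN opprK mulVf // pnatr_eq0; lia.
rewrite P_rec /= natrD; congr (_ + _).
  case: r hr => [|r] hr; first by rewrite P_f0.
  by apply: IH => //; lia.
case: ifP => hr'.
  by rewrite IH // addn2.
have -> : (r + 2)%N = m by lia.
by rewrite P_fm.
Qed.

Lemma cnt_sym N r s : (r <= 2 * k - 1)%N -> (s <= 2 * k - 1)%N ->
  cnt (2 * k - 1) N r s = cnt (2 * k - 1) N s r.
Proof.
move=> hr hs; apply/eqP; rewrite -(eqr_nat algC) !spec //; apply/eqP.
rewrite /P; congr (_ * _); apply: eq_bigr => l _; by rewrite (mulrC (f (r.+1 * l)%N)).
Qed.

Lemma lam_add_m l : lam (l + m)%N = - lam l.
Proof. by rewrite /lam exprD zm mulrN1 invrN opprD. Qed.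

Lemma lam_m l : (l <= m)%N -> lam (m - l)%N = - lam l.
Proof.
move=> hl.
have e : z ^+ (m - l)%N = - (z ^+ l)^-1.
  apply: (mulIf (zXneq0 l)); rewrite -exprD subnK // zm.
  by rewrite mulNr mulVf ?zXneq0.
by rewrite /lam e invrN invrK opprD addrC.
Qed.

Lemma sgn3 x y e q : (x + y + e)%N = (2 * q)%N ->
  (-1) ^+ x * (-1) ^+ y * (-1) ^+ e = 1 :> algC.
Proof. by move=> H; rewrite -!exprD H -signr_odd oddM andFb expr0. Qed.

Lemma fold4 (G : nat -> algC) : G 0%N = 0 ->
  (forall l, (l <= m)%N -> G (m - l)%N = G l) ->
  (forall l, G (l + m)%N = G l) ->
  \sum_(l < (2 * m)%N) G l = 4%:R * \sum_(l < k) G l.+1.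
Proof.
move=> G0 Gm Ga.
have S1 : \sum_(0 <= l < (2 * m)%N) G l =
          \sum_(0 <= l < m) G l + \sum_(m <= l < (2 * m)%N) G l.
  by rewrite (big_cat_nat _ (n := m)) //; lia.
have S2 : \sum_(m <= l < (2 * m)%N) G l = \sum_(0 <= l < m) G l.
  rewrite -{1}(add0n m) big_addn.
  have -> : (2 * m - m = m)%N by rewrite mul2n -addnn addnK.
  by apply: eq_big_nat => i _; rewrite Ga.
have S3 : \sum_(0 <= l < m) G l =
          G 0%N + \sum_(1 <= l < k.+1) G l + \sum_(k.+1 <= l < m) G l.
  rewrite big_ltn; last by lia.
  by rewrite (big_cat_nat _ (n := k.+1)) ?addrA //; lia.
have S4 : \sum_(k.+1 <= l < m) G l = \sum_(1 <= l < k.+1) G l.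
  rewrite -{1}(add1n k) big_addn.
  have -> : (m - k = k.+1)%N by lia.
  rewrite [RHS]big_nat_rev; apply: eq_big_nat => i hi.
  rewrite -Gm; last by lia.
  congr G; lia.
rewrite -(big_mkord xpredT G) S1 S2 S3 S4 G0 add0r.
rewrite (big_add1 _ _ 0 k.+1) big_mkord /=.
set S := \sum_(i < k) G i.+1.
by ring.
Qed.

Lemma sgn_rearr (sa sb sn X Y Z : algC) : sa * sb * sn = 1 ->
  (sa * X) * (sb * Y) * (sn * Z) = X * Y * Z.
Proof. move=> h; rewrite -[RHS]mul1r -h; ring. Qed.

Lemma sgn_rearr2 (sa sb sn X Y Z : algC) : sa * sb * sn = 1 ->
  (- sa * X) * (- sb * Y) * (sn * Z) = X * Y * Z.
Proof. move=> h; rewrite -[RHS]mul1r -h; ring. Qed.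

Definition dd n r s (l : nat) := - (m%:R)^-1 *
  (f (r.+1 * l.+1)%N * f (s.+1 * l.+1)%N * lam l.+1 ^+ (2 * n + r + s)%N).

Lemma entry n r s (i j : nat) : (r <= 2 * k - 1)%N -> (s <= 2 * k - 1)%N ->
  (cnt (2 * k - 1) (2 * n + 2 * i + 2 * j + r + s) r s)%:R =
  \sum_(l < k) (lam l.+1 ^+ 2) ^+ i * dd n r s l * (lam l.+1 ^+ 2) ^+ j.
Proof.
move=> hr hs; rewrite spec // /P.
set N := (2 * n + 2 * i + 2 * j + r + s)%N.
set G := fun l : nat => f (r.+1 * l)%N * f (s.+1 * l)%N * lam l ^+ N.
have hq : (r.+1 + s.+1 + N = 2 * (r + s + 1 + n + i + j))%N by rewrite /N; lia.
rewrite (fold4 G); first last.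
- move=> l; rewrite /G /= (mulnDr r.+1 l m) (mulnDr s.+1 l m) !f_addcm lam_add_m (exprNn (lam l)).
  exact: sgn_rearr (sgn3 _ _ _ _ hq).
- move=> l hl; rewrite /G /= (mulnBr r.+1 m l) (mulnBr s.+1 m l) !f_cm ?leq_mul // lam_m // (exprNn (lam l)).
  exact: sgn_rearr2 (sgn3 _ _ _ _ hq).
- by rewrite /G /= !muln0 f0 !mul0r.
rewrite mulrA.
have -> : - ((4 * m)%:R)^-1 * 4%:R = - (m%:R)^-1 :> algC.
  have h4 : (4%:R : algC) != 0 by rewrite pnatr_eq0.
  have hm : (m%:R : algC) != 0 by rewrite pnatr_eq0 addn1.
  rewrite natrM; field; by move: hm; rewrite natrD natrM.
rewrite mulr_sumr; apply: eq_bigr => l _; rewrite /G /dd.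
have -> : lam l.+1 ^+ N = lam l.+1 ^+ (2 * n + r + s)%N * (lam l.+1 ^+ 2) ^+ i * (lam l.+1 ^+ 2) ^+ j.
  by rewrite -!exprM -!exprD /N; congr (_ ^+ _); lia.
ring.
Qed.

Definition Vm : 'M[algC]_k := \matrix_(l < k, j < k) (lam l.+1 ^+ 2) ^+ j.
Definition Dr n r s : 'rV[algC]_k := \row_(l < k) dd n r s l.
Definition Mc n r s : 'M[algC]_k :=
  \matrix_(i < k, j < k) (cnt (2 * k - 1) (2 * n + 2 * i + 2 * j + r + s) r s)%:R.

Lemma Mc_fact n r s : (r <= 2 * k - 1)%N -> (s <= 2 * k - 1)%N ->
  Mc n r s = Vm^T *m diag_mx (Dr n r s) *m Vm.
Proof.
move=> hr hs; apply/matrixP => i j; rewrite !mxE entry // mul_mx_diag.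
by apply: eq_bigr => l _; rewrite !mxE.
Qed.

Lemma det_Mc n r s : (r <= 2 * k - 1)%N -> (s <= 2 * k - 1)%N ->
  \det (Mc n r s) = \det Vm ^+ 2 * \prod_(l < k) dd n r s l.
Proof.
move=> hr hs; rewrite Mc_fact // !det_mulmx det_tr det_diag.
rewrite (eq_bigr (fun l : 'I_k => dd n r s l)); last by move=> l _; rewrite mxE.
by rewrite expr2 mulrAC.
Qed.

Lemma sum_eo (F : nat -> nat) n :
  (\sum_(0 <= h < 2 * n) F h = \sum_(0 <= c < n) (F (2 * c) + F (2 * c).+1))%N.
Proof.
elim: n => [|n IH]; first by rewrite !big_geq.
have -> : (2 * n.+1 = (2 * n).+2)%N by lia.
rewrite !big_nat_recr //= ?IH. by rewrite addnA.

Qed.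

Lemma det_Mc0 : \det (Mc 0 0 0) = 1.
Proof.
pose L : 'M[algC]_k := \matrix_(i < k, c < k) (cnt (2 * k - 1) (2 * i) 0 (2 * c))%:R.
have E : Mc 0 0 0 = L *m L^T.
  apply/matrixP => i j; rewrite !mxE.
  under [RHS]eq_bigr do rewrite !mxE.
  under [RHS]eq_bigr do rewrite -natrM.
  rewrite -natr_sum; congr (_%:R).
  have -> : (2 * 0 + 2 * i + 2 * j + 0 + 0 = 2 * i + 2 * j)%N by lia.
  rewrite cnt_cat // -(big_mkord xpredT (fun h => cnt (2 * k - 1) (2 * i) 0 h * cnt (2 * k - 1) (2 * j) h 0)%N).
  have -> : (2 * k - 1).+1 = (2 * k)%N by lia.
  rewrite sum_eo big_mkord; apply: eq_bigr => c _.
  rewrite (cnt_par (2 * k - 1) (2 * i) 0 (2 * c).+1); last first.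
    have -> : (2 * i + 0 + (2 * c).+1 = (2 * (i + c)).+1)%N by lia.
    by rewrite /= oddM.
  have hc := ltn_ord c.
  rewrite mul0n addn0 (cnt_sym (2 * j) (2 * c) 0) //; lia.
have T : is_trig_mx L.
  apply/is_trig_mxP => i j hij; rewrite mxE cnt_far //; lia.
rewrite E det_mulmx det_tr det_trig //.
rewrite big1 ?mulr1 // => i _; rewrite mxE.
have hi := ltn_ord i. by rewrite -{2}(add0n (2 * i)%N) cnt_diag //; lia.
Qed.

Lemma modcancel a x y : coprime a m -> (x < m)%N -> (y < m)%N ->
  ((a * x) %% m = (a * y) %% m)%N -> x = y.
Proof.
move=> co.
wlog le : x y / (x <= y)%N.
  move=> H hx hy e; case: (leqP x y) => h; first exact: H.
  by apply/esym; apply: H => //; apply: ltnW.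
move=> hx hy /eqP; rewrite eq_sym eqn_mod_dvd; last by rewrite leq_mul2l le orbT.
rewrite -mulnBr Gauss_dvdr; last by rewrite coprime_sym. move=> d.
have : (y - x = 0)%N.
  case E: (y - x)%N => [//|t]; move: d; rewrite E => /dvdn_leq; clear -hy E; lia.
clear -le; lia.
Qed.

Lemma modsum a x y : coprime a m -> (0 < x + y < m)%N ->
  ((a * x) %% m + (a * y) %% m != m)%N.
Proof.
move=> co hxy; apply/negP => /eqP e.
have : ((a * (x + y)) %% m = 0)%N by rewrite mulnDr -modnDm e modnn.
move/eqP; rewrite -/(dvdn m _) Gauss_dvdr; last by rewrite coprime_sym.
move=> /dvdn_leq; clear -hxy; lia.
Qed.

Definition rho a (l : nat) := ((a * l.+1) %% m)%N.
Definition gg a l := if (rho a l <= k)%N then rho a l else (m - rho a l)%N.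

Lemma rho_lt a l : (rho a l < m)%N.
Proof. by rewrite /rho ltn_pmod //; lia. Qed.

Lemma gg_le a l : (gg a l <= k)%N.
Proof. rewrite /gg; have := rho_lt a l; case: ifP; clear; lia. Qed.

Lemma gg_pos a l : coprime a m -> (l < k)%N -> (0 < gg a l)%N.
Proof.
move=> co hl; have := rho_lt a l.
have : rho a l != 0%N.
  rewrite /rho -/(dvdn m _) Gauss_dvdr; last by rewrite coprime_sym.
  by apply/negP => /dvdn_leq; clear -hl; lia.
rewrite /gg; case: ifP; clear; lia.
Qed.

Lemma f_gg a l : f (a * l.+1)%N = (-1) ^+ ((a * l.+1) %/ m)%N * f (gg a l).
Proof.
rewrite {1}(divn_eq (a * l.+1) m) addnC f_addcm -/(rho a l); congr (_ * _).
rewrite /gg; case: ifP => // _.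
have h := rho_lt a l.
by rewrite -{1}(subKn (ltnW h)) f_m // leq_subr.
Qed.

Lemma gg_inj a l l' : coprime a m -> (l < k)%N -> (l' < k)%N -> gg a l = gg a l' -> l = l'.
Proof.
move=> co hl hl'.
have h1 := rho_lt a l; have h2 := rho_lt a l'.
have ms : (rho a l + rho a l' != m)%N.
  by apply: modsum => //; clear -hl hl'; lia.
have H : rho a l = rho a l' -> l = l'.
  by move=> e; have := modcancel _ _ _ co _ _ e; clear -hl hl'; lia.
rewrite /gg; move: ms H h1 h2; set u := rho a l; set v := rho a l'.
move=> ms H h1 h2; clearbody u v; clear co.
case: ifP => c1; case: ifP => c2 e.
- by apply: H.
- by move: ms; clear -e h1 h2 c1 c2; lia.
- by move: ms; clear -e h1 h2 c1 c2; lia.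
- by apply: H; lia.
Qed.

Definition eps a : algC :=
  if coprime a m then (-1) ^+ (\sum_(l < k) (a * l.+1) %/ m)%N else 0.

Lemma prodf a : (1 <= a <= 2 * k)%N ->
  \prod_(l < k) f (a * l.+1)%N = eps a * \prod_(l < k) f l.+1.
Proof.
move=> ha; rewrite /eps; case: ifP => co.
  rewrite (eq_bigr _ (fun (l : 'I_k) _ => f_gg a l)) big_split /= prodrXr; congr (_ * _).
  have gl : forall l : 'I_k, ((gg a l).-1 < k)%N.
    by move=> l; have := gg_le a l; clear -k1; lia.
  pose h (l : 'I_k) : 'I_k := Ordinal (gl l).
  have hinj : injective h.
    move=> l l' /(congr1 val) /= e; apply: val_inj => /=.
    apply: (gg_inj _ _ _ co (ltn_ord l) (ltn_ord l')).
    have := gg_pos _ _ co (ltn_ord l); have := gg_pos _ _ co (ltn_ord l').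
    by clear -e; lia.
  rewrite [RHS](reindex_inj hinj) /=; apply: eq_bigr => l _.
  by rewrite prednK // gg_pos.
rewrite mul0r.
set d := gcdn a m.
have d1 : d != 1%N by rewrite /d; move: co; rewrite /coprime => ->.
have dpos : (0 < d)%N by rewrite /d gcdn_gt0; apply/orP; right; lia.
have dm : (d %| m)%N by apply: dvdn_gcdr.
set l0 := (m %/ d)%N.
have e0 : (l0 * d = m)%N by apply: divnK.
have h2 : (l0 * 2 <= l0 * d)%N by rewrite leq_mul2l; apply/orP; right; clear -d1 dpos; lia.
have hl0 : (l0.-1 < k)%N by clear -e0 h2 k1; lia.
rewrite (bigD1 (Ordinal hl0)) //= prednK; last by clear -e0 h2; lia.
have -> : f (a * l0)%N = 0.
  apply/eqP; rewrite f_eq0 /l0 /d muln_divCA_gcd; apply: dvdn_mulr; exact: dvdnn.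
by rewrite mul0r.
Qed.

Lemma lam_f2 l : f (2 * l)%N = lam l * f l.
Proof.
rewrite /f /lam mulnC exprM; have u0 := zXneq0 l; set u := z ^+ l.
rewrite expr2; field; by rewrite u0.
Qed.

Lemma prodlam : \prod_(l < k) f l.+1 != 0 -> \prod_(l < k) lam l.+1 = 1.
Proof.
move=> nz.
have := prodf 2 (ltac:(clear -k1; lia)).
rewrite (eq_bigr _ (fun (l : 'I_k) _ => lam_f2 l.+1)) big_split /= /eps.
have -> : coprime 2 m by rewrite coprime2n addn1 /= oddM.
have -> : (\sum_(l < k) (2 * l.+1) %/ m = 0)%N.
  by apply: big1 => l _; apply: divn_small; have := ltn_ord l; clear; lia.
rewrite expr0 !mul1r.
by rewrite -{2}(mul1r (\prod_(l < k) f l.+1)) => /(mulIf nz).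
Qed.

Lemma main n r s : (r <= 2 * k - 1)%N -> (s <= 2 * k - 1)%N ->
  \det (Mc n r s) = eps r.+1 * eps s.+1.
Proof.
move=> hr hs.
have B := det_Mc0; rewrite det_Mc // in B.
rewrite det_Mc // /dd.
rewrite /dd !big_split /= prodrXl in B *.
rewrite expr0 !mulr1 in B.
have E1 : \prod_(i < k) f (1 * i.+1)%N = \prod_(i < k) f i.+1.
  by apply: eq_bigr => i _; rewrite mul1n.
rewrite E1 in B.
have nz : \prod_(i < k) f i.+1 != 0.
  by apply/negP => /eqP e; move: B; rewrite e !mulr0 => /eqP; rewrite eq_sym oner_eq0.
rewrite prodrXl prodlam // expr1n mulr1 !prodf; try (clear -hr hs k1; lia).
transitivity (eps r.+1 * eps s.+1 *
  (\det Vm ^+ 2 * (\prod_(i < k) - (m%:R)^-1 * (\prod_(i < k) f i.+1 * \prod_(i < k) f i.+1)))).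
  ring.
by rewrite B mulr1.
Qed.

End Spec.

Lemma C_cnt N K r s : (r <= K)%N -> C N K r s = cnt K N r s.
Proof.
move=> hr; rewrite /C -sum1dep_card -path_cnt // big_mkcond /=.
apply: eq_bigr => t _; rewrite hr /=; by case: path_ok.
Qed.

Theorem theorem56 (n k r s : nat) :
  (1 <= k)%N -> (r <= 2 * k - 1)%N -> (s <= 2 * k - 1)%N ->
  \det (\matrix_(i < k, j < k)
          ((C (2 * n + 2 * i + 2 * j + r + s) (2 * k - 1) r s)%:Z : int))
  = if (gcdn r.+1 (2 * k + 1) == 1%N) && (gcdn s.+1 (2 * k + 1) == 1%N)
    then (-1) ^+ (\sum_(1 <= i < k.+1)
                    ((i * r.+1) %/ (2 * k + 1) + (i * s.+1) %/ (2 * k + 1)))%N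
    else 0.
Proof.
move=> k1 hr hs.
have [z zp] := @C_prim_root_exists (2 * (2 * k + 1))%N (ltac:(lia)).
apply: (@intr_inj algC).
rewrite -det_map_mx.
have -> : map_mx intr (\matrix_(i < k, j < k)
          ((C (2 * n + 2 * i + 2 * j + r + s) (2 * k - 1) r s)%:Z : int)) = Mc k n r s.
  apply/matrixP => i j; rewrite !mxE C_cnt //.
rewrite (main _ k1 _ zp) // /eps.
have -> : (\sum_(1 <= i < k.+1)
            ((i * r.+1) %/ (2 * k + 1) + (i * s.+1) %/ (2 * k + 1)))%N =
          (\sum_(l < k) (r.+1 * l.+1) %/ (2 * k + 1) + \sum_(l < k) (s.+1 * l.+1) %/ (2 * k + 1))%N.
  rewrite (big_add1 _ _ 0 k.+1) big_mkord big_split /=.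
  by congr (_ + _); apply: eq_bigr => l _; rewrite mulnC.
rewrite /coprime; case: (gcdn r.+1 _ == 1%N); case: (gcdn s.+1 _ == 1%N) => /=;
  rewrite ?mulr0 ?mul0r ?rmorph0 //.
by rewrite rmorphXn rmorphN1 exprD.
Qed.
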